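(* Let $\mathcal{V}$ be a finite set of nodes, $\mathcal{P}$ a finite set of labels, $\mathcal{E}$ a set of unordered pairs of nodes, and $\theta_{ip},\theta_{ij,pq}\in\mathbb{R}$ unary and pairwise potential values. For $\vec{y}\in\{0,1\}^{\mathcal{V}\times\mathcal{P}}$ and $\vec{\lambda}\in\mathbb{R}^{\mathcal{V}}$ let $$L(\vec{y},\vec{\lambda})=\sum_{i\in\mathcal{V}}\sum_{p\in\mathcal{P}}\theta_{ip}y_{ip}+\sum_{\{i,j\}\in\mathcal{E}}\sum_{p,q\in\mathcal{P}}\theta_{ij,pq}y_{ip}y_{jq}+\sum_{i\in\mathcal{V}}\lambda_i\Big(\sum_{p\in\mathcal{P}}y_{ip}-1\Big)$$ and $D(\vec{\lambda})=\min_{\vec{y}\in\{0,1\}^{\mathcal{V}\times\mathcal{P}}}L(\vec{y},\vec{\lambda})$. If $\vec{\lambda}^*$ is a maximum point of $D$ over $\mathbb{R}^{\mathcal{V}}$, then $\vec{\lambda}^*$ satisfies the weak agreement condition.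
   Context: For $\vec\lambda\in\mathbb{R}^{\mathcal V}$, $i\in\mathcal V$, $p\in\mathcal P$, define $Z_{ip}(\vec\lambda)=\{z\in\{0,1\}:\ \exists\,\vec y^{\vec\lambda}\in\operatorname{Argmin}_{\vec y\in\{0,1\}^{\mathcal V\times\mathcal P}}L(\vec y,\vec\lambda)\text{ with }y^{\vec\lambda}_{ip}=z\}$, i.e. the set of values the variable $y_{ip}$ takes among all minimizers of the Lagrangian. A point $\vec\lambda$ satisfies the weak agreement condition if for every node $i\in\mathcal V$: (1) there exists $p\in\mathcal P$ with $1\in Z_{ip}(\vec\lambda)$; and (2) for every $p\in\mathcal P$, if $Z_{ip}(\vec\lambda)=\{1\}$ then $0\in Z_{iq}(\vec\lambda)$ for all $q\ne p$. *)

(* Defs.v *)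
From mathcomp Require Import all_boot all_order all_algebra.
From mathcomp Require Import reals.
Set Implicit Arguments. Unset Strict Implicit. Unset Printing Implicit Defensive.
Import Order.TTheory GRing.Theory Num.Theory.
Local Open Scope ring_scope.

Section MRF.
Variables (R : realType) (V P : finType).

Definition labeling := {ffun V * P -> bool}.

(* Edges: E is a set of ordered pairs (i,j),
   each unordered edge {i,j} represented by exactly one orientation
   (see hypotheses of the theorem); theta2 i j p q = theta_{ij,pq}. *)
Definition lagrangian (theta1 : V -> P -> R) (theta2 : V -> V -> P -> P -> R)
  (E : {set V * V}) (y : labeling) (lam : V -> R) : R :=
  \sum_(i : V) \sum_(p : P) theta1 i p * (y (i, p))%:R
  + \sum_(e in E) \sum_(p : P) \sum_(q : P)
        theta2 e.1 e.2 p q * (y (e.1, p))%:R * (y (e.2, q))%:R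
  + \sum_(i : V) lam i * ((\sum_(p : P) (y (i, p))%:R) - 1).

Definition dual theta1 theta2 E (lam : V -> R) : R :=
  \big[Num.min/lagrangian theta1 theta2 E [ffun _ => false] lam]_(y : labeling)
     lagrangian theta1 theta2 E y lam.

Definition is_minimizer theta1 theta2 E (lam : V -> R) (y : labeling) : Prop :=
  forall y' : labeling,
    lagrangian theta1 theta2 E y lam <= lagrangian theta1 theta2 E y' lam.

Definition inZ theta1 theta2 E (lam : V -> R) (i : V) (p : P) (z : bool) : Prop :=
  exists y : labeling, is_minimizer theta1 theta2 E lam y /\ y (i, p) = z.

Definition weak_agreement theta1 theta2 E (lam : V -> R) : Prop :=
  forall i : V,
    (exists p : P, inZ theta1 theta2 E lam i p true) /\
    (forall p : P,
        (inZ theta1 theta2 E lam i p true /\ ~ inZ theta1 theta2 E lam i p false) ->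
        forall q : P, q != p -> inZ theta1 theta2 E lam i q false).

End MRF.

(* Main.v *)
Require Import Defs.
From mathcomp Require Import all_boot all_order all_algebra.
From mathcomp Require Import reals.
From mathcomp Require Import ring lra.
From Stdlib Require Import Classical.
Import Order.TTheory GRing.Theory Num.Theory.
Local Open Scope ring_scope.

Section Proof.
Variables (R : realType) (V P : finType) (E : {set V * V})
  (theta1 : V -> P -> R) (theta2 : V -> V -> P -> P -> R).

Local Notation L := (lagrangian theta1 theta2 E).
Local Notation D := (dual theta1 theta2 E).
Local Notation ismin := (is_minimizer theta1 theta2 E).

Lemma dual_le lam y : D lam <= L y lam.
Proof.
rewrite /dual.
have H : forall s : seq (labeling V P), y \in s ->
  \big[Num.min/L [ffun _ => false] lam]_(j <- s) L j lam <= L y lam.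
  elim => //= a s IH; rewrite inE big_cons => /orP[/eqP->|/IH h].
    by rewrite ge_min lexx.
  by rewrite ge_min h orbT.
exact: (H _ (mem_index_enum y)).
Qed.

Lemma dual_att lam : exists y, D lam = L y lam.
Proof.
rewrite /dual; apply: (big_ind (fun v => exists y, v = L y lam)).
- by exists [ffun _ => false].
- move=> a b [ya ->] [yb ->].
  by rewrite /Num.min; case: ifP => _; [exists ya|exists yb].
- by move=> y _; exists y.
Qed.

Lemma lagr_shift lam i a y :
  L y (fun j => lam j + (if j == i then a else 0)) =
  L y lam + a * (\sum_(p : P) (y (i, p))%:R - 1).
Proof.
rewrite /lagrangian -addrA -[RHS]addrA -[in RHS]addrA; congr (_ + (_ + _)).
under eq_bigr do rewrite mulrDl.
rewrite big_split /=; congr (_ + _).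
rewrite (bigD1 i) //= eqxx [X in _ + X]big1 ?addr0 // => j /negbTE ->; by rewrite mul0r.
Qed.

Lemma contra_e (lam : V -> R) (c : labeling V P -> R) :
  (forall y, ismin lam y -> 0 < c y) ->
  exists e, 0 < e /\ forall y, D lam < L y lam + e * c y.
Proof.
move=> Hc.
have loc : forall y, exists e, 0 < e /\ forall e', 0 < e' -> e' <= e ->
    D lam < L y lam + e' * c y.
  move=> y.
  have hle := dual_le lam y.
  have minif : L y lam = D lam -> ismin lam y.
    by move=> hL y'; rewrite hL; apply: dual_le.
  case: (lerP 0 (c y)) => hc.
  - case: (eqVneq (L y lam) (D lam)) => hL.
    + have hc' := Hc _ (minif hL).
      exists 1; split => // e' he' _.
      have := mulr_gt0 he' hc'; lra.
    + have hlt : D lam < L y lam by rewrite lt_neqAle eq_sym hL hle.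
      exists 1; split => // e' he' _.
      have := mulr_ge0 (ltW he') hc; lra.
  - have hlt : D lam < L y lam.
      rewrite lt_neqAle hle andbT; apply/negP => /eqP hL.
      have := Hc _ (minif (esym hL)); lra.
    exists ((L y lam - D lam) / (2 * - c y)); split.
      apply: divr_gt0; lra.
    move=> e' he' hee.
    have hec : (L y lam - D lam) / (2 * - c y) * c y = - (L y lam - D lam) / 2.
      by field; lra.
    have h : 0 <= ((L y lam - D lam) / (2 * - c y) - e') * (- c y).
      by apply: mulr_ge0; lra.
    nra.
have comb : forall s : seq (labeling V P), exists e, 0 < e /\ forall e', 0 < e' -> e' <= e ->
    forall y, y \in s -> D lam < L y lam + e' * c y.
  elim => [|a s [e [he IH]]].
    by exists 1; split => //.
  have [ea [hea IHa]] := loc a.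
  exists (Num.min e ea); split; first by rewrite lt_min he hea.
  move=> e' he'; rewrite le_min => /andP[h1 h2] y; rewrite inE => /orP[/eqP->|hy].
    exact: IHa.
  exact: IH.
have [e [he H]] := comb (index_enum (labeling V P)).
exists e; split => // y; apply: H => //; exact: mem_index_enum.
Qed.

End Proof.

Theorem theorem2 (R : realType) (V P : finType)
  (E : {set V * V})
  (HEirr : forall i j : V, (i, j) \in E -> i != j)
  (HEuniq : forall i j : V, (i, j) \in E -> (j, i) \notin E)
  (theta1 : V -> P -> R) (theta2 : V -> V -> P -> P -> R)
  (lamstar : V -> R)
  (Hmax : forall lam : V -> R, dual theta1 theta2 E lam <= dual theta1 theta2 E lamstar) :
  weak_agreement theta1 theta2 E lamstar.
Proof.
have nodir : forall i (d : R), (forall y, is_minimizer theta1 theta2 E lamstar y ->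
    0 < d * (\sum_(p : P) (y (i, p))%:R - 1)) -> False.
  move=> i d Hd.
  have [e [he H]] := @contra_e R V P E theta1 theta2 lamstar _ Hd.
  pose lam' := fun j => lamstar j + (if j == i then e * d else 0).
  have [y0 hy0] := @dual_att R V P E theta1 theta2 lam'.
  have := Hmax lam'; rewrite hy0 /lam' (@lagr_shift R V P E theta1 theta2).
  have := H y0; rewrite mulrA; lra.
move=> i; split.
- case: (classic (exists p, inZ theta1 theta2 E lamstar i p true)) => // hn.
  exfalso; apply: (nodir i (-1)) => y hy.
  have h0 : \sum_(p : P) (y (i, p))%:R = 0 :> R.
    apply: big1 => p _.
    have -> : y (i, p) = false.
      case h: (y (i, p)) => //; exfalso; apply: hn; exists p; exists y; split => //.
    by [].
  rewrite h0; lra.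
- move=> p [hT hF] q hqp.
  case: (classic (inZ theta1 theta2 E lamstar i q false)) => // hn.
  exfalso; apply: (nodir i 1) => y hy.
  have hp : y (i, p) = true.
    case h: (y (i, p)) => //; exfalso; apply: hF; exists y; split => //.
  have hq : y (i, q) = true.
    case h: (y (i, q)) => //; exfalso; apply: hn; exists y; split => //.
  rewrite (bigD1 p) //= (bigD1 q) //= hp hq.
  have : 0 <= \sum_(j | (j != p) && (j != q)) (y (i, j))%:R :> R.
    by apply: sumr_ge0 => j _; apply: ler0n.
  have e1 : (true%:R : R) = 1 by rewrite /= mulr1n. rewrite e1 mul1r; lra.
Qed.
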